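(* Let $\mathfrak{C}$ be a category and $\mathbb{K}$ a field. Then $b(\mathfrak{C}) \cong B(\mathfrak{C}) \cong Y(\mathfrak{C})$ as semilattices.
   Context: A category is a semigroupoid (set with partial associative product) where each $x$ has unique identities $r(x),d(x)$ with $r(x)x=x=xd(x)$ and $xy$ is defined iff $d(x)=r(y)$. Ideals of $\mathfrak{C}$: subsets $\mathfrak{I}$ with $xy,yx\in\mathfrak{I}$ whenever $y\in\mathfrak{I}$ and the product is defined. A $\mathbb{K}$-semigroup is a semigroup with zero with a compatible scalar action of $\mathbb{K}$ ($\alpha(\beta x)=(\alpha\beta)x$, $1x=x$, $\alpha(xy)=(\alpha x)y=x(\alpha y)$, $0x=0$); $\mathbb{K}$-cancellative if $\alpha x=\beta x$, $x\ne 0$ imply $\alpha=\beta$. A projective representation of $\mathfrak{C}$ on a $\mathbb{K}$-cancellative semigroup $S$ is $\Gamma:\mathfrak{C}\to S$ with: if $xy$ defined, $\Gamma(xy)=0\iff\Gamma(x)\Gamma(y)=0$; if undefined, $\Gamma(x)\Gamma(y)=0$; and $\Gamma(x)\Gamma(y)=\Gamma(xy)\rho(x,y)$ with $\rho(x,y)\in\mathbb{K}^*$ whenever $xy$ defined and $\Gamma(xy)\neq0$; $\rho$, extended by $0$ elsewhere on $\mathfrak{C}\times\mathfrak{C}$, is its factor set. $m(\mathfrak{C})$ is the set of factor sets of projective representations of $\mathfrak{C}$ under pointwise multiplication; $\rho\sim\sigma$ iff there is $\nu:\mathfrak{C}\to\mathbb{K}^*$ with $\rho(x,y)=\nu(x)\nu(xy)^{-1}\nu(y)\sigma(x,y)$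 whenever $xy$ is defined; $M(\mathfrak{C})=m(\mathfrak{C})/\sim$ (the Schur multiplier). $m(\mathfrak{C})$ and $M(\mathfrak{C})$ are commutative regular semigroups, hence strong semilattices of abelian groups; $b(\mathfrak{C})$ and $B(\mathfrak{C})$ denote the corresponding semilattices (equivalently, the semilattices of idempotents of $m(\mathfrak{C})$ and $M(\mathfrak{C})$). $Y(\mathfrak{C})$ is the semilattice of ideals of $\mathfrak{C}$ (including $\emptyset$) ordered by inclusion, with union as operation. *)

(* Defs.v *)
From HB Require Import structures.
From mathcomp Require Import all_boot all_order all_algebra.
Set Implicit Arguments.
Unset Strict Implicit.
Unset Printing Implicit Defensive.
Import GRing.Theory.
Local Open Scope ring_scope.

Definition is_identity (C : Type) (comp : C -> C -> option C) (e : C) : Prop :=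
  forall y, (comp e y <> None -> comp e y = Some y) /\
            (comp y e <> None -> comp y e = Some y).

Record category := Category {
  cat_car :> Type;
  comp : cat_car -> cat_car -> option cat_car;
  (* partial associativity: (xy)z defined iff x(yz) defined, and then equal *)
  comp_assoc : forall x y z,
    obind (fun xy => comp xy z) (comp x y) = obind (fun yz => comp x yz) (comp y z);
  cat_r : cat_car -> cat_car;
  cat_d : cat_car -> cat_car;
  cat_r_id : forall x, is_identity comp (cat_r x);
  cat_d_id : forall x, is_identity comp (cat_d x);
  cat_r_comp : forall x, comp (cat_r x) x = Some x;
  cat_d_comp : forall x, comp x (cat_d x) = Some x;
  cat_r_uniq : forall x e, is_identity comp e -> comp e x = Some x -> e = cat_r x;
  cat_d_uniq : forall x e, is_identity comp e -> comp x e = Some x -> e = cat_d x;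
  comp_defined : forall x y, comp x y <> None <-> cat_d x = cat_r y
}.

Record KSemigroup (K : fieldType) := KSemigroupMk {
  ks_car :> Type;
  ks_mul : ks_car -> ks_car -> ks_car;
  ks_zero : ks_car;
  ks_act : K -> ks_car -> ks_car;
  ks_mulA : forall x y z, ks_mul x (ks_mul y z) = ks_mul (ks_mul x y) z;
  ks_mul0l : forall x, ks_mul ks_zero x = ks_zero;
  ks_mul0r : forall x, ks_mul x ks_zero = ks_zero;
  ks_actA : forall (a b : K) x, ks_act a (ks_act b x) = ks_act (a * b) x;
  ks_act1 : forall x, ks_act 1 x = x;
  ks_act_mull : forall (a : K) x y, ks_act a (ks_mul x y) = ks_mul (ks_act a x) y;
  ks_act_mulr : forall (a : K) x y, ks_act a (ks_mul x y) = ks_mul x (ks_act a y);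
  ks_act0 : forall x, ks_act 0 x = ks_zero
}.

Definition K_cancellative (K : fieldType) (S : KSemigroup K) : Prop :=
  forall (a b : K) (x : S), ks_act a x = ks_act b x -> x <> ks_zero S -> a = b.

Definition proj_rep (K : fieldType) (C : category) (S : KSemigroup K)
    (G : C -> S) : Prop :=
  (forall x y z, comp x y = Some z ->
      (G z = ks_zero S <-> ks_mul (G x) (G y) = ks_zero S)) /\
  (forall x y, comp x y = None -> ks_mul (G x) (G y) = ks_zero S) /\
  (forall x y z, comp x y = Some z -> G z <> ks_zero S ->
      exists a : K, a != 0 /\ ks_mul (G x) (G y) = ks_act a (G z)).

Definition factor_set_of (K : fieldType) (C : category) (S : KSemigroup K)
    (G : C -> S) (rho : C -> C -> K) : Prop :=
  forall x y,
    (exists z, comp x y = Some z /\ G z <> ks_zero S /\ rho x y != 0 /\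
               ks_mul (G x) (G y) = ks_act (rho x y) (G z)) \/
    ((forall z, comp x y = Some z -> G z = ks_zero S) /\ rho x y = 0).

Definition in_m (K : fieldType) (C : category) (rho : C -> C -> K) : Prop :=
  exists S : KSemigroup K, K_cancellative S /\
    exists G : C -> S, proj_rep G /\ factor_set_of G rho.

Definition fs_mul (K : fieldType) (C : category) (rho sigma : C -> C -> K)
  : C -> C -> K := fun x y => rho x y * sigma x y.

Definition fs_eq (K : fieldType) (C : category) (rho sigma : C -> C -> K) : Prop :=
  forall x y, rho x y = sigma x y.

(* the equivalence ~ defining M(C) = m(C)/~ *)
Definition fs_sim (K : fieldType) (C : category) (rho sigma : C -> C -> K) : Prop :=
  exists nu : C -> K, (forall x, nu x != 0) /\
    forall x y z, comp x y = Some z ->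
      rho x y = nu x * (nu z)^-1 * nu y * sigma x y.

Definition in_b (K : fieldType) (C : category) (rho : C -> C -> K) : Prop :=
  in_m rho /\ fs_eq (fs_mul rho rho) rho.

(* representatives of the idempotents of M(C) = B(C) *)
Definition in_B (K : fieldType) (C : category) (rho : C -> C -> K) : Prop :=
  in_m rho /\ fs_sim (fs_mul rho rho) rho.

Definition is_ideal (C : category) (I : C -> Prop) : Prop :=
  forall x y z, comp x y = Some z -> (I y -> I z) /\ (I x -> I z).

Definition set_union (C : Type) (I J : C -> Prop) : C -> Prop :=
  fun x => I x \/ J x.

Definition set_eq (C : Type) (I J : C -> Prop) : Prop :=
  forall x, I x <-> J x.

(* The carrier of
   the actual semilattice is the quotient of {x | P x} by eq; f induces a
   well-defined bijection of these quotients preserving the operations. *)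
Definition semilattice_iso (A B : Type)
    (PA : A -> Prop) (eqA : A -> A -> Prop) (opA : A -> A -> A)
    (PB : B -> Prop) (eqB : B -> B -> Prop) (opB : B -> B -> B)
    (f : A -> B) : Prop :=
  (forall x y, PA x -> PA y -> PA (opA x y)) /\
  (forall x y, PB x -> PB y -> PB (opB x y)) /\
  (forall x, PA x -> PB (f x)) /\
  (forall x y, PA x -> PA y -> (eqB (f x) (f y) <-> eqA x y)) /\
  (forall z, PB z -> exists x, PA x /\ eqB (f x) z) /\
  (forall x y, PA x -> PA y -> eqB (f (opA x y)) (opB (f x) (f y))).

(* Main.v *)
Require Import Defs.
From mathcomp Require Import all_boot all_order all_algebra.
From mathcomp Require Import ring.
From Stdlib Require Import ClassicalEpsilon.
Set Implicit Arguments.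
Unset Strict Implicit.
Unset Printing Implicit Defensive.
Import GRing.Theory.
Local Open Scope ring_scope.

Notation ccomp := Defs.comp.
Definition dec (P : Prop) : bool :=
  if excluded_middle_informative P then true else false.
Lemma decP (P : Prop) : reflect P (dec P).
Proof. rewrite /dec; case: excluded_middle_informative => h; by constructor. Qed.
Lemma decT (P : Prop) : P -> dec P = true.
Proof. by move/decP. Qed.
Lemma decF (P : Prop) : ~ P -> dec P = false.
Proof. by move=> h; apply/decP. Qed.

Definition rhoIc (K : fieldType) (C : category) (I : C -> Prop) (c : C -> K)
  (x y : C) : K :=
  match ccomp x y with
  | Some z => if dec (I z) then 0 else c x * c y / c z
  | None => 0 end.

Definition valid (K : fieldType) (C : category) (p : option (C * K)) : bool :=
  if p is Some (_, a) then a != 0 else true.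

Definition rmul (K : fieldType) (C : category) (I : C -> Prop)
  (p q : option (C * K)) : option (C * K) :=
  match p, q with
  | Some (x, a), Some (y, b) =>
      match ccomp x y with
      | Some z => if dec (I z) || (a * b == 0) then None else Some (z, a * b)
      | None => None end
  | _, _ => None end.

Definition ract (K : fieldType) (C : category) (a : K) (p : option (C * K))
  : option (C * K) :=
  match p with
  | Some (x, b) => if a * b == 0 then None else Some (x, a * b)
  | None => None end.

Lemma rmul_valid (K : fieldType) (C : category) I (p q : option (C * K)) :
  valid (rmul I p q).
Proof.
case: p => [[x a]|] //; case: q => [[y b]|] //=; case: ccomp => [z|] //=.
by case: dec => //=; case: eqP => // /eqP.
Qed.

Lemma ract_valid (K : fieldType) (C : category) a (p : option (C * K)) :
  valid (ract a p).
Proof. by case: p => [[x b]|] //=; case: eqP => // /eqP. Qed.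

Lemma rmulA (K : fieldType) (C : category) (I : C -> Prop) (hI : is_ideal I)
  (p q r : option (C * K)) :
  rmul I p (rmul I q r) = rmul I (rmul I p q) r.
Proof.
case: p => [[x a]|] //; case: q => [[y b]|] //.
case: r => [[w c]|]; last first.
  by case: (rmul I (Some (x, a)) (Some (y, b))) => [[]|].
pose nf := match obind (fun u => ccomp u w) (ccomp x y) with
  | Some v => if dec (I v) || (a * b * c == 0) then None else Some (v, a * b * c)
  | None => None end.
transitivity nf; last first.
  rewrite /nf /=; case exy: (ccomp x y) => [u|] //=.
  case: (decP (I u)) => Iu /=.
    case euw: (ccomp u w) => [v|] //=.
    by rewrite (decT ((hI _ _ _ euw).2 Iu)).
  case hab: (a * b == 0) => /=.
    case euw: (ccomp u w) => [v|] //=.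
    by rewrite mulf_eq0 hab !orbT.
  by [].
rewrite /nf (Defs.comp_assoc x y w) /=.
case eyw: (ccomp y w) => [t|] //=.
case: (decP (I t)) => It /=.
  case ext: (ccomp x t) => [v|] //=.
  by rewrite (decT ((hI _ _ _ ext).1 It)).
case hbc: (b * c == 0) => /=.
  case ext: (ccomp x t) => [v|] //=.
  by rewrite -mulrA mulf_eq0 hbc !orbT.
by rewrite mulrA.
Qed.

Definition Scar (K : fieldType) (C : category) := {p : option (C * K) | valid p}.

Lemma sig_eq (K : fieldType) (C : category) (p q : Scar K C) :
  sval p = sval q -> p = q.
Proof.
case: p => p hp; case: q => q hq /= e; subst q; f_equal; exact: bool_irrelevance.
Qed.

Definition smul (K : fieldType) (C : category) I (p q : Scar K C) : Scar K C :=
  exist _ (rmul I (sval p) (sval q)) (rmul_valid I _ _).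
Definition szero (K : fieldType) (C : category) : Scar K C := exist _ None isT.
Definition sact (K : fieldType) (C : category) (a : K) (p : Scar K C) : Scar K C :=
  exist _ (ract a (sval p)) (ract_valid a _).

Lemma smulA (K : fieldType) (C : category) I (hI : is_ideal I) (x y z : Scar K C) :
  smul I x (smul I y z) = smul I (smul I x y) z.
Proof. apply: sig_eq => /=; exact: rmulA. Qed.

Lemma smul0l (K : fieldType) (C : category) I (x : Scar K C) :
  smul I (szero K C) x = szero K C.
Proof. by apply: sig_eq. Qed.

Lemma smul0r (K : fieldType) (C : category) I (x : Scar K C) :
  smul I x (szero K C) = szero K C.
Proof. by apply: sig_eq => /=; case: x => [[[? ?]|] ?]. Qed.

Lemma sactA (K : fieldType) (C : category) (a b : K) (x : Scar K C) :
  sact a (sact b x) = sact (a * b) x.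
Proof.
apply: sig_eq => /=; case: x => [[[y c]|] ?] //=.
case hbc: (b * c == 0) => /=.
  by rewrite -mulrA mulf_eq0 hbc orbT.
by rewrite mulrA.
Qed.

Lemma sact1 (K : fieldType) (C : category) (x : Scar K C) : sact 1 x = x.
Proof.
apply: sig_eq => /=; case: x => [[[y c]|] hc] //=.
by rewrite mul1r (negbTE hc).
Qed.

Lemma sact_mull (K : fieldType) (C : category) I (a : K) (x y : Scar K C) :
  sact a (smul I x y) = smul I (sact a x) y.
Proof.
apply: sig_eq => /=; case: x => [[[u b]|] ?] //=; case: y => [[[w c]|] ?] /=;
  last by case: ifP.
case hab: (a * b == 0) => /=.
  case: ccomp => [z|] //=; case: ifP => //= _.
  by rewrite mulrA mulf_eq0 hab.
case: ccomp => [z|] //=; case: dec => //=.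
case hbc: (b * c == 0) => /=.
  by rewrite -mulrA mulf_eq0 hbc orbT.
by rewrite mulrA.
Qed.

Lemma sact_mulr (K : fieldType) (C : category) I (a : K) (x y : Scar K C) :
  sact a (smul I x y) = smul I x (sact a y).
Proof.
apply: sig_eq => /=; case: x => [[[u b]|] ?] //=; case: y => [[[w c]|] ?] /=; last by [].
case hac: (a * c == 0) => /=.
  case: ccomp => [z|] //=; case: ifP => //= _.
  by rewrite mulrCA mulf_eq0 hac orbT.
case: ccomp => [z|] //=; case: dec => //=.
case hbc: (b * c == 0) => /=.
  by rewrite mulrCA mulf_eq0 hbc orbT.
by rewrite mulrCA.
Qed.

Lemma sact0 (K : fieldType) (C : category) (x : Scar K C) : sact 0 x = szero K C.
Proof. by apply: sig_eq => /=; case: x => [[[y c]|] ?] //=; rewrite mul0r eqxx. Qed.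

Definition SI (K : fieldType) (C : category) I (hI : is_ideal I) : KSemigroup K :=
  @KSemigroupMk K (Scar K C) (smul I) (szero K C) (@sact K C)
    (@smulA K C I hI) (@smul0l K C I) (@smul0r K C I) (@sactA K C) (@sact1 K C)
    (@sact_mull K C I) (@sact_mulr K C I) (@sact0 K C).

Lemma SI_canc (K : fieldType) (C : category) I (hI : is_ideal I) :
  K_cancellative (@SI K C I hI).
Proof.
rewrite /K_cancellative /= => a b x; case: x => [[[y c]|] hc] e nz; last first.
  by exfalso; apply: nz; apply: sig_eq.
move: e => /(f_equal sval) /=.
rewrite !mulf_eq0 (negbTE hc) !orbF.
case: (eqVneq a 0) => [->|ha]; case: (eqVneq b 0) => [->|hb] //= [].
by move/(mulIf hc).
Qed.

Lemma rhoIc_None (K : fieldType) (C : category) I (c : C -> K) x y :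
  ccomp x y = None -> rhoIc I c x y = 0.
Proof. by rewrite /rhoIc => ->. Qed.

Lemma rhoIc_SomeI (K : fieldType) (C : category) I (c : C -> K) x y z :
  ccomp x y = Some z -> I z -> rhoIc I c x y = 0.
Proof. by rewrite /rhoIc => -> /decT ->. Qed.

Lemma rhoIc_Some (K : fieldType) (C : category) I (c : C -> K) x y z :
  ccomp x y = Some z -> ~ I z -> rhoIc I c x y = c x * c y / c z.
Proof. by rewrite /rhoIc => -> /decF ->. Qed.

Lemma rhoIc_zero (K : fieldType) (C : category) I (c : C -> K) x y z :
  (forall t, c t != 0) -> ccomp x y = Some z -> (rhoIc I c x y = 0 <-> I z).
Proof.
move=> hc e; case: (decP (I z)) => Iz.
  by rewrite (rhoIc_SomeI c e Iz).
rewrite (rhoIc_Some c e Iz); split=> // /eqP.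
by rewrite !mulf_eq0 invr_eq0 (negbTE (hc x)) (negbTE (hc y)) (negbTE (hc z)).
Qed.

Lemma rhoIc_ext (K : fieldType) (C : category) I (c c' : C -> K) x y :
  (forall t, c t = c' t) -> rhoIc I c x y = rhoIc I c' x y.
Proof. by move=> h; rewrite /rhoIc; case: ccomp => [z|] //; rewrite !h. Qed.

Lemma rhoIc_mul (K : fieldType) (C : category) I J (c d : C -> K) x y :
  rhoIc I c x y * rhoIc J d x y
  = rhoIc (set_union I J) (fun t => c t * d t) x y.
Proof.
rewrite /rhoIc; case: ccomp => [z|]; last by rewrite mul0r.
case: (decP (I z)) => hI; case: (decP (J z)) => hJ;
  case: (decP (set_union I J z)) => hU; rewrite /set_union in hU;
  try (exfalso; tauto); rewrite ?mul0r ?mulr0 //.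
by rewrite !invfM; ring.
Qed.

Definition Gc (K : fieldType) (C : category) I (c : C -> K)
  (hc : forall t, c t != 0) (x : C) : Scar K C :=
  exist _ (if dec (I x) then None else Some (x, c x))
    (match dec (I x) as b return valid (if b then None else Some (x, c x))
     with true => isT | false => hc x end).

Lemma Gc_key (K : fieldType) (C : category) I (hI : is_ideal I) (c : C -> K)
  (hc : forall t, c t != 0) x y z :
  ccomp x y = Some z -> ~ I z ->
  smul I (Gc I hc x) (Gc I hc y) = sact (c x * c y / c z) (Gc I hc z).
Proof.
move=> e nIz; have nIx : ~ I x by move=> Ix; apply: nIz; exact: ((hI _ _ _ e).2 Ix).
have nIy : ~ I y by move=> Iy; apply: nIz; exact: ((hI _ _ _ e).1 Iy).
apply: sig_eq => /=; rewrite (decF nIx) (decF nIy) (decF nIz) /= e (decF nIz) /=.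
rewrite divfK // mulf_eq0 (negbTE (hc x)) (negbTE (hc y)) /=.
Qed.

Lemma rep_exists (K : fieldType) (C : category) I (hI : is_ideal I) (c : C -> K)
  (hc : forall t, c t != 0) (rho : C -> C -> K) :
  (forall x y, rho x y = rhoIc I c x y) -> in_m rho.
Proof.
move=> hr; exists (@SI K C I hI); split; first exact: SI_canc.
exists (Gc I hc); split; last first.
  move=> x y; case e: (ccomp x y) => [z|]; last first.
    by right; split=> [z //|]; rewrite hr rhoIc_None.
  case: (decP (I z)) => Iz.
    right; split; last by rewrite hr (rhoIc_SomeI c e Iz).
    move=> z' [<-]; apply: sig_eq => /=; by rewrite (decT Iz).
  left; exists z; split=> //; split.
    by move/(f_equal sval) => /=; rewrite (decF Iz).
  rewrite hr (rhoIc_Some c e Iz); split; last exact: Gc_key.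
  by rewrite !mulf_neq0 ?invr_eq0 ?hc.
split; [|split].
- move=> x y z e; case: (decP (I z)) => Iz.
    have -> : Gc I hc z = szero K C by apply: sig_eq => /=; rewrite (decT Iz).
    split=> // _.
    case: (decP (I x)) => Ix.
      by apply: sig_eq => /=; rewrite (decT Ix).
    case: (decP (I y)) => Iy.
      by apply: sig_eq => /=; rewrite (decT Iy) (decF Ix).
    apply: sig_eq => /=; by rewrite (decF Ix) (decF Iy) /= e (decT Iz).
  rewrite /= (Gc_key hI hc e Iz); split.
    by move/(f_equal sval) => /=; rewrite (decF Iz).
  move/(f_equal sval) => /=; rewrite (decF Iz) /=.
  by rewrite !mulf_eq0 invr_eq0 !(negbTE (hc _)).
- move=> x y e; apply: sig_eq => /=.
  by case: dec => //; case: dec => //=; rewrite e.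
- move=> x y z e nz; exists (c x * c y / c z); split.
    by rewrite !mulf_neq0 ?invr_eq0 ?hc.
  apply: Gc_key => // Iz; apply: nz; apply: sig_eq => /=; by rewrite (decT Iz).
Qed.

Lemma in_m_char (K : fieldType) (C : category) (rho : C -> C -> K) :
  in_m rho -> exists I, is_ideal I /\
    forall x y, (rho x y != 0 <-> exists z, ccomp x y = Some z /\ ~ I z).
Proof.
move=> [S [_ [G [[p1 [p2 p3]] fs]]]].
exists (fun z => G z = ks_zero S); split.
  move=> x y z e; split=> h; apply/(p1 _ _ _ e).
    by rewrite h ks_mul0r.
  by rewrite h ks_mul0l.
move=> x y; case: (fs x y) => [[z [e [nz [rnz _]]]]|[hz ->]].
  by split=> // _; exists z.
by rewrite eqxx; split=> // [[z [e nz]]]; exfalso; apply: nz; exact: hz.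
Qed.

Lemma in_B_char (K : fieldType) (C : category) (rho : C -> C -> K) :
  in_B rho <-> exists I c, is_ideal I /\ (forall t, c t != 0) /\
    forall x y, rho x y = rhoIc I c x y.
Proof.
split.
  move=> [hm [nu [hnu hs]]]; have [I [hI hsup]] := in_m_char hm.
  exists I, nu; split=> //; split=> // x y.
  case e: (ccomp x y) => [z|]; last first.
    rewrite rhoIc_None //; case: (eqVneq (rho x y) 0) => // /hsup [z' [e' _]].
    by rewrite e in e'.
  case: (decP (I z)) => Iz.
    rewrite (rhoIc_SomeI nu e Iz); case: (eqVneq (rho x y) 0) => // /hsup [z' [e' nz']].
    by rewrite e in e'; case: e' => ez; subst z'.
  have rnz : rho x y != 0 by apply/hsup; exists z.
  rewrite (rhoIc_Some nu e Iz); apply: (mulIf rnz).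
  have := hs x y z e; rewrite /fs_mul => ->.
  by rewrite [nu x * _ * nu y]mulrAC.
move=> [I [c [hI [hc hr]]]]; split; first exact: (rep_exists hI hc hr).
exists c; split=> // x y z e; rewrite /fs_mul hr.
case: (decP (I z)) => Iz; first by rewrite (rhoIc_SomeI c e Iz) !mulr0.
rewrite (rhoIc_Some c e Iz).
by rewrite [c x * _ * c y]mulrAC.
Qed.

Lemma in_b_char (K : fieldType) (C : category) (rho : C -> C -> K) :
  in_b rho <-> exists I, is_ideal I /\
    forall x y, rho x y = rhoIc I (fun _ => 1) x y.
Proof.
split.
  move=> [hm hid]; have [I [hI hsup]] := in_m_char hm.
  exists I; split=> // x y.
  case e: (ccomp x y) => [z|]; last first.
    rewrite rhoIc_None //; case: (eqVneq (rho x y) 0) => // /hsup [z' [e' _]].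
    by rewrite e in e'.
  case: (decP (I z)) => Iz.
    rewrite (rhoIc_SomeI _ e Iz); case: (eqVneq (rho x y) 0) => // /hsup [z' [e' nz']].
    by rewrite e in e'; case: e' => ez; subst z'.
  have rnz : rho x y != 0 by apply/hsup; exists z.
  rewrite (rhoIc_Some _ e Iz) mulr1 invr1 mulr1; apply: (mulfI rnz).
  by rewrite mulr1; exact: hid.
move=> [I [hI hr]]; split.
  by apply: (rep_exists hI _ hr) => _; exact: oner_neq0.
move=> x y; rewrite /fs_mul hr /rhoIc; case: ccomp => [z|]; last by rewrite mulr0.
by case: dec; rewrite ?mulr0 // mulr1 invr1 mulr1 mulr1.
Qed.

Lemma union_ideal (C : category) (I J : C -> Prop) :
  is_ideal I -> is_ideal J -> is_ideal (set_union I J).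
Proof.
move=> hI hJ x y z e; have [a b] := hI x y z e; have [a' b'] := hJ x y z e.
rewrite /set_union; split; tauto.
Qed.

Lemma ideal_eq (C : category) (I J : C -> Prop) :
  set_eq I J -> is_ideal I -> is_ideal J.
Proof.
move=> h hI x y z e; have [a b] := hI x y z e.
split=> /h ? ; apply/h; tauto.
Qed.

Definition gmap (K : fieldType) (C : category) (rho : C -> C -> K) : C -> Prop :=
  fun z => forall x y, ccomp x y = Some z -> rho x y = 0.

Lemma gmap_char (K : fieldType) (C : category) I (c : C -> K)
  (hc : forall t, c t != 0) (rho : C -> C -> K) :
  (forall x y, rho x y = rhoIc I c x y) -> set_eq (gmap rho) I.
Proof.
move=> hr z; split.
  move=> h; have := h _ _ (cat_r_comp z); rewrite hr.
  by move/(rhoIc_zero I hc (cat_r_comp z)).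
by move=> Iz x y e; rewrite hr; apply/(rhoIc_zero I hc e).
Qed.

Lemma scale_zero (K : fieldType) (a b k : K) :
  k != 0 -> a = k * b -> (a = 0 <-> b = 0).
Proof.
move=> hk ->; split; last by move=> ->; rewrite mulr0.
by move/eqP; rewrite mulf_eq0 (negbTE hk) /= => /eqP.
Qed.

Theorem mainTheorem7 (K : fieldType) (C : category) :
  (exists f : (C -> C -> K) -> (C -> C -> K),
      semilattice_iso (@in_b K C) (@fs_eq K C) (@fs_mul K C)
                      (@in_B K C) (@fs_sim K C) (@fs_mul K C) f) /\
  (exists g : (C -> C -> K) -> (C -> Prop),
      semilattice_iso (@in_B K C) (@fs_sim K C) (@fs_mul K C)
                      (@is_ideal C) (@set_eq C) (@set_union C) g).
Proof.
have one_nz : forall t : C, (fun _ : C => (1 : K)) t != 0 by move=> _; exact: oner_neq0.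
have Bmul : forall x y : C -> C -> K, in_B x -> in_B y -> in_B (fs_mul x y).
  move=> x y /in_B_char [I [c [hI [hc hx]]]] /in_B_char [J [d [hJ [hd hy]]]].
  apply/in_B_char; exists (set_union I J), (fun t => c t * d t).
  split; first exact: union_ideal.
  split; first by move=> t; rewrite mulf_neq0.
  by move=> a b; rewrite /fs_mul hx hy rhoIc_mul.
split.
  exists id; split; [|split; [exact: Bmul|split; [|split; [|split]]]].
  - move=> x y /in_b_char [I [hI hx]] /in_b_char [J [hJ hy]].
    apply/in_b_char; exists (set_union I J); split; first exact: union_ideal.
    move=> a b; rewrite /fs_mul hx hy rhoIc_mul.
    by apply: rhoIc_ext => t; rewrite mulr1.
  - move=> x /in_b_char [I [hI hx]]; apply/in_B_char.
    by exists I, (fun _ => 1); split.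
  - move=> x y /in_b_char [I [hI hx]] /in_b_char [J [hJ hy]] /=; split; last first.
      move=> h; exists (fun _ => 1); split=> // a b z _.
      by rewrite h invr1 !mul1r.
    move=> [nu [hnu hs]] a b; rewrite hx hy.
    case e: (ccomp a b) => [z|]; last by rewrite !rhoIc_None.
    have hk : nu a * (nu z)^-1 * nu b != 0 by rewrite !mulf_neq0 ?invr_eq0.
    have := scale_zero hk (hs a b z e); rewrite hx hy.
    rewrite (rhoIc_zero I one_nz e) (rhoIc_zero J one_nz e) => hIJ.
    case: (decP (I z)) => Iz.
      by rewrite (rhoIc_SomeI _ e Iz) (rhoIc_SomeI _ e (proj1 hIJ Iz)).
    have nJz : ~ J z by move=> /hIJ.
    by rewrite (rhoIc_Some _ e Iz) (rhoIc_Some _ e nJz).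
  - move=> z /in_B_char [I [c [hI [hc hz]]]].
    exists (rhoIc I (fun _ => 1)); split.
      by apply/in_b_char; exists I; split.
    exists (fun t => (c t)^-1); split; first by move=> t; rewrite invr_eq0.
    move=> a b w e; rewrite hz /=.
    case: (decP (I w)) => Iw.
      by rewrite (rhoIc_SomeI _ e Iw) (rhoIc_SomeI _ e Iw) mulr0.
    rewrite (rhoIc_Some _ e Iw) (rhoIc_Some _ e Iw) invrK.
    have := hc a; have := hc b; have := hc w; move=> hw hb ha.
    move: (c a) (c b) (c w) ha hb hw => A B W hA hB hW; field; by rewrite hA hB hW oner_neq0.
  - move=> x y _ _; exists (fun _ => 1); split=> // a b z _.
    by rewrite invr1 !mul1r.
exists (@gmap K C); split; [exact: Bmul|split; [exact: union_ideal|split; [|split; [|split]]]].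
- move=> x /in_B_char [I [c [hI [hc hx]]]].
  apply: (ideal_eq _ hI) => z; exact: (iff_sym (gmap_char hc hx z)).
- move=> x y /in_B_char [I [c [hI [hc hx]]]] /in_B_char [J [d [hJ [hd hy]]]].
  have gx := gmap_char hc hx; have gy := gmap_char hd hy.
  split.
    move=> hg; have hIJ : set_eq I J.
      by move=> z; rewrite -(gx z) -(gy z); exact: hg.
    exists (fun t => c t / d t); split; first by move=> t; rewrite mulf_neq0 ?invr_eq0.
    move=> a b z e; rewrite hx hy.
    case: (decP (I z)) => Iz.
      by rewrite (rhoIc_SomeI _ e Iz) (rhoIc_SomeI _ e (proj1 (hIJ z) Iz)) mulr0.
    have nJz : ~ J z by move=> /(hIJ z).
    rewrite (rhoIc_Some _ e Iz) (rhoIc_Some _ e nJz).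
    move: (c a) (c b) (c z) (d a) (d b) (d z) (hc a) (hc b) (hc z) (hd a) (hd b) (hd z).
    move=> A B Z A1 B1 Z1 hA hB hZ hA1 hB1 hZ1; field.
    by rewrite hB1 hZ hA1 hZ1.
  move=> [nu [hnu hs]] z; rewrite (gx z) (gy z).
  have e := cat_r_comp z.
  have hk : nu (cat_r z) * (nu z)^-1 * nu z != 0 by rewrite !mulf_neq0 ?invr_eq0.
  have := scale_zero hk (hs _ _ _ e); rewrite hx hy.
  by rewrite (rhoIc_zero I hc e) (rhoIc_zero J hd e).
- move=> J hJ; exists (rhoIc J (fun _ => 1)); split.
    by apply/in_B_char; exists J, (fun _ => 1); split.
  exact: (gmap_char one_nz (fun x y => erefl)).
- move=> x y /in_B_char [I [c [hI [hc hx]]]] /in_B_char [J [d [hJ [hd hy]]]] z.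
  have gx := gmap_char hc hx z; have gy := gmap_char hd hy z.
  have hcd : forall t, c t * d t != 0 by move=> t; rewrite mulf_neq0.
  have gxy := gmap_char (rho := fs_mul x y) hcd
      (fun a b => etrans (f_equal2 _ (hx a b) (hy a b)) (rhoIc_mul I J c d a b)) z.
  rewrite gxy /set_union gx gy; tauto.
Qed.
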